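(* For every $x\in\mathbb T^3\setminus\mathfrak I$, the collisional invariant region $\mathcal S(x)$ is Lebesgue measurable.
   Context: $\mathbb{T}^3=\mathbb{R}^3/\mathbb{Z}^3$; $\omega(k)=\omega_0+\sum_{j=1}^3 2(1-\cos(2\pi k^j))$ with fixed $2<\omega_0<3$. Two wave vectors $x,y\in\mathbb{T}^3$ are connected by one collision if $\omega(y)=\omega(x)+\omega(y-x)$, or $\omega(x)=\omega(y)+\omega(x-y)$, or $\omega(x+y)=\omega(x)+\omega(y)$. The no-collision region $\mathfrak I$ is the set of $x\in\mathbb T^3$ such that no $y\in\mathbb T^3$ is connected to $x$ by one collision. For $x\in\mathbb T^3\setminus\mathfrak I$: $\mathcal S^1(x)$ is the set of $y$ connected to $x$ by one collision, $\mathcal S^n(x)=\bigcup_{z\in\mathcal S^{n-1}(x)}\mathcal S^1(z)$ for $n\ge2$, and $\mathcal S(x)=\bigcup_{n\ge1}\mathcal S^n(x)$. *)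

(* Defs.v *)
From HB Require Import structures.
From mathcomp Require Import all_boot all_order all_algebra.
From mathcomp Require Import all_classical all_reals all_analysis.
Set Implicit Arguments. Unset Strict Implicit. Unset Printing Implicit Defensive.
Import Order.TTheory GRing.Theory Num.Theory.
Local Open Scope classical_set_scope.
Local Open Scope ring_scope.

(* Points of R^3 are triples ((k1, k2), k3).  The torus T^3 = R^3/Z^3 is
   represented through Z^3-periodic objects on R^3. *)
Definition vec (R : realType) := ((R * R) * R)%type.

Section Defs.
Variable R : realType.

Definition vadd (x y : vec R) : vec R :=
  ((x.1.1 + y.1.1, x.1.2 + y.1.2), x.2 + y.2).
Definition vsub (x y : vec R) : vec R :=
  ((x.1.1 - y.1.1, x.1.2 - y.1.2), x.2 - y.2).

Definition omega (w0 : R) (k : vec R) : R :=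
  w0 + 2 * (1 - cos (2 * pi * k.1.1)) + 2 * (1 - cos (2 * pi * k.1.2))
     + 2 * (1 - cos (2 * pi * k.2)).

Definition connected1 (w0 : R) (x y : vec R) : Prop :=
  omega w0 y = omega w0 x + omega w0 (vsub y x) \/
  omega w0 x = omega w0 y + omega w0 (vsub x y) \/
  omega w0 (vadd x y) = omega w0 x + omega w0 y.

Definition noCollision (w0 : R) : set (vec R) :=
  [set x | forall y, ~ connected1 w0 x y].

Definition S1 (w0 : R) (x : vec R) : set (vec R) := [set y | connected1 w0 x y].

(* Sn w0 x n = S^{n+1}(x) *)
Fixpoint Sn (w0 : R) (x : vec R) (n : nat) : set (vec R) :=
  match n with
  | O => S1 w0 x
  | S m => \bigcup_(z in Sn w0 x m) S1 w0 z
  end.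

Definition Sinv (w0 : R) (x : vec R) : set (vec R) := \bigcup_n Sn w0 x n.

(* Lebesgue measure on R^3 as the product of three copies of the
   Lebesgue measure on R (defined on the Borel/product sigma-algebra). *)
Definition lebesgue3 : set (vec R) -> \bar R :=
  ((@lebesgue_measure R \x @lebesgue_measure R) \x @lebesgue_measure R)%E.

(* Lebesgue measurable = measurable for the completion of lebesgue3:
   differs from a Borel set by a lebesgue3-negligible set. *)
Definition lebesgue_measurable3 (A : set (vec R)) : Prop :=
  exists B : set (vec R), measurable B /\
    lebesgue3.-negligible ((A `\` B) `|` (B `\` A)).

End Defs.

(* Main.v *)
Require Import Defs.
From HB Require Import structures.
From mathcomp Require Import all_boot all_order all_algebra.
From mathcomp Require Import all_classical all_reals all_analysis.
From mathcomp Require Import ring lra.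
Import Order.TTheory GRing.Theory Num.Theory.
Import numFieldNormedType.Exports.
Local Open Scope classical_set_scope.
Local Open Scope ring_scope.
Section S. Variable R : realType.
Local Notation T := ((R*R)*R)%type.


Definition rbox (q : ((rat*rat)*(rat*rat))*(rat*rat)) : set T :=
  (`]ratr q.1.1.1, ratr q.1.1.2[ `*` `]ratr q.1.2.1, ratr q.1.2.2[) `*`
   `]ratr q.2.1, ratr q.2.2[.

Lemma rat_around (p e : R) : 0 < e -> exists a b : rat,
  p - e < ratr a < p /\ p < ratr b < p + e.
Proof.
move=> e0.
have h1 : p - e < p by rewrite ltrBlDr ltrDl.
have h2 : p < p + e by rewrite ltrDl.
have [a /itvP ha] := rat_in_itvoo h1.
have [b /itvP hb] := rat_in_itvoo h2.
by exists a, b; rewrite !ha !hb.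
Qed.

Lemma open_meas3 (U : set T) : open U -> measurable U.
Proof.
move=> oU.
have -> : U = \bigcup_q (if `[< rbox q `<=` U >] then rbox q else set0).
  apply/seteqP; split; last first.
    by move=> y [q _]; case: ifPn => // /asboolP; apply.
  move=> p Up.
  move: oU; rewrite openE => /(_ _ Up) /nbhs_ballP [e /= e0 heU].
  have [a1 [b1 [h1 h1']]] := @rat_around p.1.1 e e0.
  have [a2 [b2 [h2 h2']]] := @rat_around p.1.2 e e0.
  have [a3 [b3 [h3 h3']]] := @rat_around p.2 e e0.
  exists (((a1,b1),(a2,b2)),(a3,b3)) => //.
  have -> : `[< rbox (((a1,b1),(a2,b2)),(a3,b3)) `<=` U >].
    apply/asboolP => y [[/= y1 y2] y3]; apply: heU.
    move: y1 y2 y3; rewrite /= !in_itv /= => /andP[y1 y1'] /andP[y2 y2'] /andP[y3 y3'].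
    move: h1 h1' h2 h2' h3 h3' => /andP[? ?] /andP[? ?] /andP[? ?] /andP[? ?] /andP[? ?] /andP[? ?].
    split; [split|]; rewrite /ball /= ltr_norml; apply/andP; split; lra.
  by rewrite /rbox /= !in_itv /=; split; [split|]; apply/andP; split;
    move: h1 h1' h2 h2' h3 h3' => /andP[? ?] /andP[? ?] /andP[? ?] /andP[? ?] /andP[? ?] /andP[? ?].
apply: countable_bigcupT_measurable; first exact: countableP.
move=> q; case: ifPn => // _.
apply: measurableX; first apply: measurableX; exact: measurable_itv.
Qed.

Lemma fst_cont (A B : topologicalType) : continuous (@fst A B).
Proof. move=> p; exact: cvg_fst. Qed.
Lemma snd_cont (A B : topologicalType) : continuous (@snd A B).
Proof. move=> p; exact: cvg_snd. Qed.
Lemma vsubE (a b : T) : vsub a b = a - b. Proof. by []. Qed.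
Lemma vaddE (a b : T) : vadd a b = a + b. Proof. by []. Qed.
Definition cf (t : R) := 2 * (1 - cos (2 * pi * t)).
Lemma cf_cont : continuous cf.
Proof.
move=> t.
have -> : cf = (fun=> 2) \* ((fun=> 1) - (cos \o (fun t => 2 * pi * t))).
  by apply/funext.
apply: continuousM; first exact: cst_continuous.
apply: continuousB; first exact: cst_continuous.
apply: continuous_comp; last exact: continuous_cos.
apply: continuousM; first exact: cst_continuous.
done.
Qed.
Lemma omegaC3 (X : topologicalType) (w0 : R) (g : X -> T) :
  continuous g -> continuous (fun p => omega w0 (g p)).
Proof.
move=> gc p.
have -> : (fun p => omega w0 (g p)) = (fun=> w0) + (cf \o fst \o fst \o g)
   + (cf \o snd \o fst \o g) + (cf \o snd \o g).
  by apply/funext => q; rewrite /omega /cf /=.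
apply: continuousD; last first.
  apply: continuous_comp; first exact: gc.
  apply: continuous_comp; [exact: snd_cont | exact: cf_cont].
apply: continuousD; last first.
  apply: continuous_comp; first exact: gc.
  apply: continuous_comp; first exact: fst_cont.
  apply: continuous_comp; [exact: snd_cont | exact: cf_cont].
apply: continuousD; first exact: cst_continuous.
apply: continuous_comp; first exact: gc.
apply: continuous_comp; first exact: fst_cont.
apply: continuous_comp; [exact: fst_cont | exact: cf_cont].
Qed.

Lemma closed_meas3 (A : set T) : closed A -> measurable A.
Proof.
move=> cA; rewrite -(setCK A); apply: measurableC; apply: open_meas3.
exact: closed_openC.
Qed.

Lemma closed_eqfun (X : topologicalType) (f g : X -> R) :
  continuous f -> continuous g -> closed [set p | f p = g p].
Proof.
move=> fc gc.
have -> : [set p | f p = g p] = (f - g) @^-1` [set 0].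
  apply/seteqP; split => p /=; first by move=> fg; rewrite /GRing.add /= fg subrr.
  by move/eqP; rewrite subr_eq0 => /eqP.
apply: (continuous_closedP (f - g)).1; last exact: closed_eq.
by move=> p; apply: continuousB; [exact: fc | exact: gc].
Qed.

Lemma vsub_cont (X : topologicalType) (u v : X -> T) :
  continuous u -> continuous v -> continuous (fun p => vsub (u p) (v p)).
Proof.
move=> uc vc p; have -> : (fun p => vsub (u p) (v p)) = u - v by [].
by apply: continuousB; [exact: uc | exact: vc].
Qed.

Lemma vadd_cont (X : topologicalType) (u v : X -> T) :
  continuous u -> continuous v -> continuous (fun p => vadd (u p) (v p)).
Proof.
move=> uc vc p; have -> : (fun p => vadd (u p) (v p)) = u + v by [].
by apply: continuousD; [exact: uc | exact: vc].
Qed.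

Lemma contD2 (X : topologicalType) (f g : X -> R) :
  continuous f -> continuous g -> continuous (fun p => f p + g p).
Proof.
move=> fc gc p; have -> : (fun p => f p + g p) = f + g by [].
by apply: continuousD; [exact: fc | exact: gc].
Qed.

Lemma closed_conn (X : topologicalType) (w0 : R) (u v : X -> T) :
  continuous u -> continuous v -> closed [set p | Defs.connected1 w0 (u p) (v p)].
Proof.
move=> uc vc.
have om := @omegaC3 X w0.
apply: closedU; [|apply: closedU].
- apply: closed_eqfun; first exact: om.
  apply: contD2; first exact: om.
  by apply: om; apply: vsub_cont.
- apply: closed_eqfun; first exact: om.
  apply: contD2; first exact: om.
  by apply: om; apply: vsub_cont.
- apply: closed_eqfun; first by apply: om; apply: vadd_cont.
  apply: contD2; exact: om.
Qed.

Lemma cos_nat (u : R) (k : nat) : cos (u + (pi *+ 2) *+ k) = cos u.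
Proof.
elim: k => [|k IH]; first by rewrite mulr0n addr0.
by rewrite mulrS addrCA addrC cosD2pi IH.
Qed.

Lemma cos_int (a : R) (n : int) : cos (2 * pi * (a + n%:~R)) = cos (2 * pi * a).
Proof.
case: n => k.
  have -> : 2 * pi * (a + (Posz k)%:~R) = 2 * pi * a + (pi *+ 2) *+ k.
    by rewrite mulrDr -mulr_natr -mulr_natr /=; ring.
  exact: cos_nat.
rewrite -(cos_nat (2 * pi * (a + (Negz k)%:~R)) k.+1); congr cos.
rewrite NegzE intrN -pmulrn mulrDr -mulr_natr -mulr_natr; ring.
Qed.

Definition iv (m : (int * int) * int) : T := ((m.1.1%:~R, m.1.2%:~R), m.2%:~R).

Lemma omegaD (w0 : R) (k : T) m : omega w0 (k + iv m) = omega w0 k.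
Proof. by rewrite /omega /= !cos_int. Qed.

Lemma omegaB (w0 : R) (k : T) m : omega w0 (k - iv m) = omega w0 k.
Proof.
have -> : k - iv m = k + iv ((- m.1.1, - m.1.2), - m.2).
  by rewrite /iv /= !intrN.
exact: omegaD.
Qed.

Lemma conn_r (w0 : R) (a b : T) m :
  Defs.connected1 w0 a b -> Defs.connected1 w0 a (vsub b (iv m)).
Proof.
rewrite /Defs.connected1 !vsubE !vaddE.
have -> : b - iv m - a = (b - a) - iv m by rewrite addrAC.
have -> : a - (b - iv m) = (a - b) + iv m by rewrite opprB addrA addrAC.
have -> : a + (b - iv m) = (a + b) - iv m by rewrite addrA.
by rewrite !omegaB omegaD.
Qed.

Lemma conn_l (w0 : R) (a b : T) m :
  Defs.connected1 w0 a b -> Defs.connected1 w0 (vsub a (iv m)) b.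
Proof.
rewrite /Defs.connected1 !vsubE !vaddE.
have -> : b - (a - iv m) = (b - a) + iv m by rewrite opprB addrA addrAC.
have -> : a - iv m - b = (a - b) - iv m by rewrite addrAC.
have -> : a - iv m + b = (a + b) - iv m by rewrite addrAC.
by rewrite !omegaB omegaD.
Qed.

Lemma Sn_per (w0 : R) (x : T) n (z : T) m :
  Sn w0 x n z -> Sn w0 x n (vsub z (iv m)).
Proof.
elim: n z => [|n IH] z /=; first exact: conn_r.
by move=> [u Su Cuz]; exists u => //; apply: conn_r.
Qed.

Definition Bm (k : R) : set T := (`[-k, k] `*` `[-k, k]) `*` `[-k, k].

Lemma Bm_compact k : compact (Bm k).
Proof. by apply: compact_setX; [apply: compact_setX|]; exact: segment_compact. Qed.

Lemma floor_red (t : R) : t - (Num.floor t)%:~R \in `[- 1, 1].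
Proof.
have h1 := floor_le t; have h2 := floorD1_gt t.
rewrite intrD in h2.
rewrite in_itv /=; apply/andP; split; lra.
Qed.

Lemma Sn_compact (w0 : R) (x : T) n (k : R) : compact (Bm k `&` Sn w0 x n).
Proof.
elim: n k => [|n IH] k.
  apply: compact_closedI; first exact: Bm_compact.
  exact: (@closed_conn T w0 (fun=> x) id (@cst_continuous _ _ x) (fun p => cvg_id)).
have -> : Bm k `&` Sn w0 x n.+1 =
   snd @` (((Bm 1 `&` Sn w0 x n) `*` Bm k) `&` [set p | Defs.connected1 w0 p.1 p.2]).
  apply/seteqP; split.
    move=> y [By [z Sz Czy]].
    pose m := ((Num.floor z.1.1, Num.floor z.1.2), Num.floor z.2).
    exists (vsub z (iv m), y) => //; split; last exact: conn_l.
    split => //; split; last exact: Sn_per.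
    rewrite /Bm /=.
    by split; [split|]; move: (floor_red z.1.1) (floor_red z.1.2) (floor_red z.2); rewrite !in_itv /= => /andP[? ?] /andP[? ?] /andP[? ?]; apply/andP; split.
  by move=> y [[z y'] [[[B1z Sz] By'] C] <-]; split => //; exists z.
apply: continuous_compact; first exact/continuous_subspaceT/snd_cont.
apply: compact_closedI; first exact: compact_setX (IH 1) (Bm_compact k).
exact: closed_conn (@fst_cont _ _) (@snd_cont _ _).
Qed.

Lemma Sinv_meas (w0 : R) (x : T) : measurable (Sinv w0 x : set T).
Proof.
have -> : (Sinv w0 x : set T) =
    \bigcup_n \bigcup_(j : nat) (Bm j%:R `&` Sn w0 x n).
  apply/seteqP; split.
    move=> y [n _ Sy]; exists n => //.
    exists (Num.truncn (`|y.1.1| + `|y.1.2| + `|y.2|)).+1 => //; split => //.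
    have h := truncnS_gt (`|y.1.1| + `|y.1.2| + `|y.2|).
    have a1 := normr_ge0 y.1.1; have a2 := normr_ge0 y.1.2; have a3 := normr_ge0 y.2.
    set N := _.+1%:R in h *.
    have b1 : `|y.1.1| <= N by lra.
    have b2 : `|y.1.2| <= N by lra.
    have b3 : `|y.2| <= N by lra.
    rewrite /Bm /=; split; [split|]; rewrite in_itv /= -ler_norml //.
  by move=> y [n _ [j _ [_ Sy]]]; exists n.
apply: bigcupT_measurable => n; apply: bigcupT_measurable => j.
apply: closed_meas3; apply: compact_closed; first exact: norm_hausdorff.
exact: Sn_compact.
Qed.
End S.

Theorem mainTheorem5 (R : realType) (w0 : R) (hw0 : 2 < w0 < 3) (x : vec R) :
  ~ noCollision w0 x -> lebesgue_measurable3 (Sinv w0 x).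
Proof.
move=> _; exists (Sinv w0 x); split; first exact: Sinv_meas.
rewrite setDv setU0; exists set0; split => //.
Qed.
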